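(* Any quantum oracle algorithm that solves $\mathsf{LCS\text{-}RLE}$ with probability at least $2/3$ requires $\tilde\Omega(n)$ queries, where $n$ is the encoded length of the inputs.
   Context: A string $\tilde s$ has run-length encoding (RLE) $s=s[1]\cdots s[m]$, its sequence of maximal runs of identical characters, each run having character $C(s[i])$ and length $R(s[i])$; $|s|=m$ is the encoded length. An RLE string $t$ is a generalized substring of $s$ if $\tilde t$ is a substring of $\tilde s$. The problem $\mathsf{LCS\text{-}RLE}$: given quantum oracle access to two RLE strings $A$ and $B$ only through the unitaries $|i\rangle|c\rangle|r\rangle\mapsto|i\rangle|c\oplus C(S[i])\rangle|r\oplus R(S[i])\rangle$ for $S\in\{A,B\}$ (no prefix-sum oracle), find a longest common generalized substring $s$ of $A$ and $B$ (i.e. $\tilde s$ is a longest common substring of $\tilde A$ and $\tilde B$) and output a triple $(i_A,i_B,\ell)$ with $\ell=|s|$, where an occurrence of $\tilde s$ in $\tilde A$ starts within the run $A[i_A]$ and one in $\tilde B$ starts within the run $B[i_B]$. $\tilde\Omega(\cdot)$ hides polylogarithmic factors. *)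

(* Defs.v *)
From mathcomp Require Import all_boot all_order all_algebra.
From mathcomp Require Import complex.
From mathcomp Require Import Rstruct.

Set Implicit Arguments.
Unset Strict Implicit.
Unset Printing Implicit Defensive.

Import Order.TTheory GRing.Theory Num.Theory.

Definition Cx : Type := (Rdefinitions.R)[i].

Definition word (b : nat) : finType := {ffun 'I_b -> bool}.
Definition word0 (b : nat) : word b := [ffun => false].
Definition xorw (b : nat) (u v : word b) : word b := [ffun j => u j (+) v j].
Definition bits_of (b r : nat) : word b := [ffun j : 'I_b => odd (r %/ 2 ^ j)].

(* RLE strings: a run is (character, length); characters are b-bit words *)
Definition run (b : nat) := (word b * nat)%type.

(* a valid RLE string of encoded length n whose characters and run lengths
   fit in b-bit registers: positive lengths < 2^b, maximal runs
   (consecutive runs have distinct characters) *)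
Definition valid_rle (n b : nat) (s : seq (run b)) : Prop :=
  [/\ size s = n,
      all (fun r : run b => (0 < r.2 < 2 ^ b)%N) s
    & sorted (fun x y : run b => x.1 != y.1) s].

Definition expand (b : nat) (s : seq (run b)) : seq (word b) :=
  flatten [seq nseq r.2 r.1 | r <- s].

(* number of maximal runs of an (expanded) string = its encoded length *)
Fixpoint nruns (T : eqType) (u : seq T) : nat :=
  match u with
  | [::] => 0
  | [:: _] => 1
  | x :: ((y :: _) as u') => ((x != y) + nruns u')%N
  end.

Definition is_LCS (b : nat) (A B : seq (run b)) (u : seq (word b)) : Prop :=
  [/\ infix u (expand A), infix u (expand B)
    & forall v, infix v (expand A) -> infix v (expand B) -> (size v <= size u)%N].

Definition run_start (b : nat) (s : seq (run b)) (i : nat) : nat :=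
  sumn [seq r.2 | r <- take i s].

Definition occ_in_run (b : nat) (s : seq (run b)) (u : seq (word b)) (i : nat) : Prop :=
  exists p, [/\ take (size u) (drop p (expand s)) = u,
                (run_start s i <= p)%N & (p < run_start s i.+1)%N].

(* (iA, iB, l) is a correct answer of LCS-RLE on (A, B) (runs indexed from 0) *)
Definition valid_output (b : nat) (A B : seq (run b)) (o : nat * nat * nat) : Prop :=
  exists u, [/\ is_LCS A B u, o.2 = nruns u, occ_in_run A u o.1.1
              & occ_in_run B u o.1.2].

(* basis states: |s, i, c, r, w> with s selecting the oracle (A or B),
   i the run index, c and r the b-bit answer registers, w the workspace *)
Definition qspace (n b m : nat) : finType :=
  (bool * 'I_n * word b * word b * 'I_m)%type.

Definition op (X : finType) := X -> X -> Cx.    (* matrix entries <x|U|y> *)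
Definition qstate (X : finType) := X -> Cx.

Local Open Scope ring_scope.

Definition apply_op (X : finType) (U : op X) (v : qstate X) : qstate X :=
  fun x => \sum_(y : X) U x y * v y.

Definition basis (X : finType) (x0 : X) : qstate X := fun x => (x == x0)%:R.

Definition unitary (X : finType) (U : op X) : Prop :=
  forall x y : X, \sum_(z : X) (U z x)^* * U z y = (x == y)%:R.

Definition oracle_map (n b m : nat) (A B : seq (run b)) (x : qspace n b m)
  : qspace n b m :=
  let: (s, i, c, r, w) := x in
  let e := nth (word0 b, 0%N) (if s then B else A) i in
  (s, i, xorw c e.1, xorw r (bits_of b e.2), w).

Definition oracle (n b m : nat) (A B : seq (run b)) : op (qspace n b m) :=
  fun x y => (x == oracle_map A B y)%:R.

Fixpoint final_state (X : finType) (U : nat -> op X) (O : op X) (x0 : X) (T : nat)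
  : qstate X :=
  match T with
  | 0 => apply_op (U 0%N) (basis x0)
  | T'.+1 => apply_op (U T) (apply_op O (final_state U O x0 T'))
  end.

Definition succeeds (n b m T : nat) (U : nat -> op (qspace n b m))
  (x0 : qspace n b m) (out : qspace n b m -> nat * nat * nat)
  (A B : seq (run b)) : Prop :=
  let st := final_state U (oracle A B) x0 T in
  exists P : pred (qspace n b m),
    (forall x, P x -> valid_output A B (out x)) /\
    (2%:R / 3%:R : Cx) <= \sum_(x | P x) `|st x| ^+ 2.

(* Main.v *)
Require Import Defs.
From mathcomp Require Import all_boot all_order all_algebra.
From mathcomp Require Import complex Rstruct.
From mathcomp Require Import ring lra zify.
Import Order.TTheory GRing.Theory Num.Theory.

Set Implicit Arguments.
Unset Strict Implicit.
Unset Printing Implicit Defensive.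

Section Quantum.
Local Open Scope ring_scope.
Notation RR := Rdefinitions.R.

Definition nc (z : Cx) : RR := Normc.normc z.

Lemma normE (z : Cx) : `|z| = ((nc z)%:C)%C.
Proof. by []. Qed.

Lemma nc_ge0 z : 0 <= nc z.
Proof. by case: z => a b; rewrite /nc /= sqrtr_ge0. Qed.

Lemma nc_conj z : nc (z^*) = nc z.
Proof. by case: z => a b; rewrite /nc /= sqrrN. Qed.

Lemma nc_mul x y : nc (x * y) = nc x * nc y.
Proof. exact: Normc.normcM. Qed.

Lemma nc_add x y : nc (x + y) <= nc x + nc y.
Proof. exact: (@le_normcD RR x y). Qed.

Lemma nc_opp x : nc (- x) = nc x.
Proof. exact: (@normcN RR x). Qed.

Lemma nc_sum (I : Type) (r : seq I) (P : pred I) (F : I -> Cx) :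
  nc (\sum_(i <- r | P i) F i) <= \sum_(i <- r | P i) nc (F i).
Proof.
elim/big_rec2: _ => [|i y1 y2 _ H]; first by rewrite /nc /= expr0n /= addr0 sqrtr0.
by apply: le_trans (nc_add _ _) _; rewrite lerD2l.
Qed.

Lemma conj_mul_self (z : Cx) : z^* * z = (((nc z) ^+ 2)%:C)%C.
Proof.
case: z => a b; rewrite /nc /= sqr_sqrtr ?addr_ge0 ?sqr_ge0 //.
apply/eqP; rewrite eq_complex /=; apply/andP; split; apply/eqP; ring.
Qed.

Variable X : finType.

Definition ip (u v : qstate X) : Cx := \sum_z (u z)^* * v z.
Definition nm (u : qstate X) : RR := \sum_z nc (u z) ^+ 2.

Lemma ip_self u : ip u u = ((nm u)%:C)%C.
Proof.
rewrite /ip /nm rmorph_sum; apply: eq_bigr => z _.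
by rewrite conj_mul_self.
Qed.

Lemma ip_unitary (U : op X) u v : unitary U ->
  ip (apply_op U u) (apply_op U v) = ip u v.
Proof.
move=> HU; rewrite /ip /apply_op.
transitivity (\sum_z \sum_y \sum_w ((U z y)^* * U z w) * ((u y)^* * v w)).
  apply: eq_bigr => z _; rewrite rmorph_sum mulr_suml; apply: eq_bigr => y _.
  rewrite mulr_sumr; apply: eq_bigr => w _; rewrite rmorphM; ring.
rewrite exchange_big /=.
transitivity (\sum_y \sum_w (\sum_z (U z y)^* * U z w) * ((u y)^* * v w)).
  apply: eq_bigr => y _; rewrite exchange_big /=; apply: eq_bigr => w _.
  by rewrite mulr_suml.
apply: eq_bigr => y _; rewrite (bigD1 y) //= HU eqxx mul1r big1 ?addr0 //.
by move=> w nyw; rewrite HU eq_sym (negbTE nyw) mul0r.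
Qed.

Lemma ip_basis x0 : ip (basis x0) (basis x0) = 1.
Proof.
rewrite /ip /basis (bigD1 x0) //= big1 ?addr0.
  by rewrite eqxx conjC1 mulr1.
by move=> z /negbTE ->; rewrite mulr0.
Qed.

Variable idx : X -> nat.

Lemma apply_perm (pi : X -> X) (v : qstate X) z :
  involutive pi ->
  apply_op (fun x y => (x == pi y)%:R) v z = v (pi z).
Proof.
move=> Hpi; rewrite /apply_op (bigD1 (pi z)) //= Hpi eqxx mul1r big1 ?addr0 //.
move=> y Hy; case: eqP => [Hz|]; last by rewrite mul0r.
by move: Hy; rewrite Hz Hpi eqxx.
Qed.

Lemma reindex_sum (pi : X -> X) (P : pred X) (F : X -> RR) :
  involutive pi -> (forall z, P (pi z) = P z) ->
  \sum_(z | P z) F (pi z) = \sum_(z | P z) F z.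
Proof.
move=> Hpi HP; rewrite [RHS](reindex_inj (inv_inj Hpi)) /=.
by apply: eq_bigl => z; rewrite HP.
Qed.

Lemma reindex_sumC (pi : X -> X) (P : pred X) (F : X -> Cx) :
  involutive pi -> (forall z, P (pi z) = P z) ->
  \sum_(z | P z) F (pi z) = \sum_(z | P z) F z.
Proof.
move=> Hpi HP; rewrite [RHS](reindex_inj (inv_inj Hpi)) /=.
by apply: eq_bigl => z; rewrite HP.
Qed.

Definition mj (j : nat) (u : qstate X) : RR :=
  \sum_(z | idx z == j) nc (u z) ^+ 2.

Lemma amgm (a b : RR) : a * b <= (a ^+ 2 + b ^+ 2) / 2.
Proof. have h := sqr_ge0 (a - b). nra. Qed.

Lemma nc_sum_bound (pi1 pi2 : X -> X) j (u v : qstate X) :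
  involutive pi1 -> involutive pi2 ->
  (forall z, idx (pi1 z) = idx z) -> (forall z, idx (pi2 z) = idx z) ->
  nc (\sum_(z | idx z == j) (u (pi1 z))^* * v (pi2 z)) <= (mj j u + mj j v) / 2.
Proof.
move=> H1 H2 I1 I2.
apply: le_trans (nc_sum _ _ _) _.
rewrite [X in _ <= X](_ : _ = \sum_(z | idx z == j) (nc (u (pi1 z)) ^+ 2 + nc (v (pi2 z)) ^+2) / 2).
  by apply: ler_sum => z _; rewrite nc_mul nc_conj; apply: amgm.
rewrite -mulr_suml big_split /= /mj.
rewrite (@reindex_sum pi1 (fun z => idx z == j) (fun z => nc (u z) ^+ 2) H1); last by move=> z; rewrite I1.
by rewrite (@reindex_sum pi2 (fun z => idx z == j) (fun z => nc (v z) ^+ 2) H2) // => z; rewrite I2.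
Qed.

Lemma step_bound (pi1 pi2 : X -> X) j (u v : qstate X) :
  involutive pi1 -> involutive pi2 ->
  (forall z, idx (pi1 z) = idx z) -> (forall z, idx (pi2 z) = idx z) ->
  (forall z, idx z != j -> pi1 z = pi2 z) ->
  nc (ip u v) - (mj j u + mj j v) <=
  nc (\sum_z (u (pi1 z))^* * v (pi2 z)).
Proof.
move=> H1 H2 I1 I2 E.
set F := fun z => (u (pi1 z))^* * v (pi2 z).
set G := fun z => (u z)^* * v z.
have eF : \sum_z F z = \sum_(z | idx z == j) F z + \sum_(z | idx z != j) G z.
  rewrite (bigID (fun z => idx z == j)) /=; congr (_ + _).
  transitivity (\sum_(z | idx z != j) G (pi1 z)).
    by apply: eq_bigr => z Hz; rewrite /F /G E.
  by apply: reindex_sumC => // z; rewrite I1.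
have eG : ip u v = \sum_(z | idx z == j) G z + \sum_(z | idx z != j) G z.
  by rewrite /ip (bigID (fun z => idx z == j)).
have -> : ip u v = \sum_z F z + \sum_(z | idx z == j) G z - \sum_(z | idx z == j) F z.
  by rewrite eF eG; ring.
have hF := nc_sum_bound j u v H1 H2 I1 I2.
have hG := nc_sum_bound (pi1 := id) (pi2 := id) j u v (fun _ => erefl) (fun _ => erefl)
   (fun _ => erefl) (fun _ => erefl).
have t1 := nc_add (\sum_z F z + \sum_(z | idx z == j) G z) (- \sum_(z | idx z == j) F z).
have t2 := nc_add (\sum_z F z) (\sum_(z | idx z == j) G z).
rewrite nc_opp in t1.
rewrite /F /G /= in hF hG t1 t2 *.
lra.
Qed.


Lemma amgm2 (a b : RR) : 2 * (a * b) <= 7/10 * a ^+ 2 + 10/7 * b ^+ 2.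
Proof. have h := sqr_ge0 (7 * a - 10 * b). nra. Qed.

Lemma final_bound (u v : qstate X) (P1 P2 : pred X) :
  nm u = 1 -> nm v = 1 -> (forall z, P1 z -> P2 z -> False) ->
  2 / 3 <= \sum_(z | P1 z) nc (u z) ^+ 2 ->
  2 / 3 <= \sum_(z | P2 z) nc (v z) ^+ 2 ->
  nc (ip u v) <= 19 / 20.
Proof.
move=> Nu Nv D Hu Hv.
have h1 : nc (ip u v) <= \sum_z nc (u z) * nc (v z).
  apply: le_trans (nc_sum _ _ _) _.
  by apply: ler_sum => z _; rewrite nc_mul nc_conj.
rewrite (bigID P1) /= in h1.
have h2 : 2 * \sum_(z | P1 z) nc (u z) * nc (v z) <=
   7/10 * \sum_(z | P1 z) nc (u z) ^+ 2 + 10/7 * \sum_(z | P1 z) nc (v z) ^+ 2.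
  rewrite !mulr_sumr -big_split /=; apply: ler_sum => z _; exact: amgm2.
have h3 : 2 * \sum_(z | ~~ P1 z) nc (u z) * nc (v z) <=
   10/7 * \sum_(z | ~~ P1 z) nc (u z) ^+ 2 + 7/10 * \sum_(z | ~~ P1 z) nc (v z) ^+ 2.
  rewrite !mulr_sumr -big_split /=; apply: ler_sum => z _.
  have := amgm2 (nc (v z)) (nc (u z)); rewrite [nc (v z) * _]mulrC; lra.
have eu : \sum_(z | P1 z) nc (u z) ^+ 2 + \sum_(z | ~~ P1 z) nc (u z) ^+ 2 = 1.
  by move: Nu; rewrite /nm (bigID P1).
have ev : \sum_(z | P1 z) nc (v z) ^+ 2 + \sum_(z | ~~ P1 z) nc (v z) ^+ 2 = 1.
  by move: Nv; rewrite /nm (bigID P1).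
have h4 : \sum_(z | P2 z) nc (v z) ^+ 2 <= \sum_(z | ~~ P1 z) nc (v z) ^+ 2.
  rewrite [X in _ <= X](bigID P2) /=.
  have -> : \sum_(z | ~~ P1 z && P2 z) nc (v z) ^+ 2 = \sum_(z | P2 z) nc (v z) ^+ 2.
    apply: eq_bigl => z; case H2: (P2 z); last by rewrite andbF.
    by case H1: (P1 z) => //; have := D z H1 H2.
  rewrite lerDl; apply: sumr_ge0 => z _; exact: sqr_ge0.
lra.
Qed.

End Quantum.

Section Alg.
Local Open Scope ring_scope.
Notation RR := Rdefinitions.R.
Variables (X : finType) (idx : X -> nat) (U : nat -> op X) (x0 : X) (T : nat).
Hypothesis HU : forall t, (t <= T)%N -> unitary (U t).

Definition permop (pi : X -> X) : op X := fun x y => (x == pi y)%:R.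
Definition fs (pi : X -> X) t := final_state U (permop pi) x0 t.

Lemma ip_fs_succ pi1 pi2 t : involutive pi1 -> involutive pi2 -> (t < T)%N ->
  ip (fs pi1 t.+1) (fs pi2 t.+1) = \sum_z (fs pi1 t (pi1 z))^* * fs pi2 t (pi2 z).
Proof.
move=> H1 H2 Ht; rewrite /fs /= ip_unitary; last exact: HU.
by rewrite /ip; apply: eq_bigr => z _; rewrite !apply_perm.
Qed.

Lemma fs_norm pi t : involutive pi -> (t <= T)%N -> nm (fs pi t) = 1.
Proof.
move=> H; elim: t => [|t IH] Ht.
  apply: (@complexI RR); rewrite -ip_self /fs /= ip_unitary ?ip_basis //.
  exact: HU.
apply: (@complexI RR); rewrite -ip_self ip_fs_succ //.
rewrite (@reindex_sumC _ pi predT (fun z => (fs pi t z)^* * fs pi t z)) //.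
by rewrite -/(ip _ _) ip_self IH ?(ltnW Ht).
Qed.

Lemma fs_pair pi1 pi2 j t : involutive pi1 -> involutive pi2 ->
  (forall z, idx (pi1 z) = idx z) -> (forall z, idx (pi2 z) = idx z) ->
  (forall z, idx z != j -> pi1 z = pi2 z) -> (t <= T)%N ->
  1 - \sum_(i < t) (mj idx j (fs pi1 i) + mj idx j (fs pi2 i)) <=
  nc (ip (fs pi1 t) (fs pi2 t)).
Proof.
move=> H1 H2 I1 I2 E; elim: t => [|t IH] Ht.
  rewrite big_ord0 subr0 /fs /= ip_unitary ?ip_basis; last exact: HU.
  by rewrite /nc /= expr0n /= addr0 expr1n sqrtr1.
rewrite ip_fs_succ // big_ord_recr /=.
have := step_bound (fs pi1 t) (fs pi2 t) H1 H2 I1 I2 E.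
have := IH (ltnW Ht).
lra.
Qed.

End Alg.

Section Cube.
Variable N' : nat.
Let N := N'.+1.
Variable k : nat.
Hypothesis HNk : (2 * k + 1 <= N)%N.

Definition wt (x : {ffun 'I_N -> bool}) : nat := \sum_(i < N) (x i : nat).
Definition flip (x : {ffun 'I_N -> bool}) (j : 'I_N) : {ffun 'I_N -> bool} :=
  [ffun i => if i == j then ~~ x i else x i].
Definition cross (x : {ffun 'I_N -> bool}) (j : 'I_N) := (k < wt x) != (k < wt (flip x j)).
Definition bnd (x : {ffun 'I_N -> bool}) := (wt x == k) || (wt x == k.+1).

Lemma flipK j : involutive (flip ^~ j).
Proof.
move=> x; apply/ffunP => i; rewrite !ffunE; case: eqP => //= _; by rewrite negbK.
Qed.

Lemma wt_split x j : wt x = (x j + \sum_(i < N | i != j) x i)%N.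
Proof. by rewrite /wt (bigD1 j). Qed.

Lemma wt_flip x j : wt (flip x j) = (~~ x j + \sum_(i < N | i != j) x i)%N.
Proof.
rewrite /wt (bigD1 j) //= ffunE eqxx; congr (_ + _)%N.
by apply: eq_bigr => i /negbTE Hi; rewrite ffunE Hi.
Qed.

Lemma crossE x j : cross x j = if x j then wt x == k.+1 else wt x == k.
Proof.
rewrite /cross (wt_split x j) wt_flip.
set r := (\sum_(i < N | i != j) x i)%N.
case: (x j) => /=; apply/idP/idP; lia.
Qed.

Lemma cross_flip x j : cross (flip x j) j = cross x j.
Proof. by rewrite /cross flipK eq_sym. Qed.

Lemma cross_bnd x j : cross x j -> bnd x.
Proof. by rewrite crossE /bnd; case: (x j) => ->; rewrite ?orbT. Qed.

Lemma sum_compl (x : {ffun 'I_N -> bool}) : (\sum_(i < N) (~~ x i : nat) + wt x = N)%N.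
Proof.
rewrite /wt -big_split /=.
rewrite (eq_bigr (fun _ => 1%N)); last by move=> i _; case: (x i).
by rewrite sum_nat_const card_ord muln1.
Qed.

Lemma count_cross x : (k.+1 * bnd x <= \sum_j cross x j)%N.
Proof.
rewrite /bnd; case: (wt x =P k) => Hk /=.
  rewrite (eq_bigr (fun j => (~~ x j : nat))).
    move: (sum_compl x) HNk; rewrite Hk; set s := (\sum_(i < N) _)%N; move=> H1 H2; rewrite muln1; clearbody N; lia.
  move=> j _; rewrite crossE Hk; case: (x j) => /=; last by rewrite eqxx.
  by have -> : (k == k.+1) = false by apply/negbTE; lia.
case: (wt x =P k.+1) => Hk1 /=; last by rewrite [(_ * _)%N](_ : _ = 0%N) // muln0.
rewrite (eq_bigr (fun j => (x j : nat))).
  by rewrite -/(wt x) Hk1 muln1.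
move=> j _; rewrite crossE Hk1 eqxx; case: (x j) => //=.
by have -> : (k.+1 == k) = false by apply/negbTE; lia.
Qed.

Lemma exists_bnd : exists x, bnd x.
Proof.
have Hw : wt [ffun i : 'I_N => (i < k)%N] = k.
  rewrite /wt (eq_bigr (fun i : 'I_N => ((i : nat) < k)%N : nat)); last by move=> i _; rewrite ffunE.
  rewrite -(big_mkord xpredT (fun i => ((i < k)%N : nat))).
  rewrite (big_cat_nat _ (n := k)) //=; last by lia.
  rewrite [X in (_ + X)%N]big_nat_cond [X in (_ + X)%N]big1 ?addn0; last first.
    by move=> i /andP[/andP[H _] _]; rewrite ltnNge H.
  rewrite big_nat_cond (eq_bigr (fun _ => 1%N)); last first.
    by move=> i /andP[/andP[_ ->] _].
  by rewrite -big_nat_cond sum_nat_const_nat subn0 muln1.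
by exists [ffun i : 'I_N => (i < k)%N]; rewrite /bnd Hw eqxx.
Qed.

Local Open Scope ring_scope.
Notation RR := Rdefinitions.R.

Lemma sum_arg (T : nat) (mm : {ffun 'I_N -> bool} -> 'I_N -> nat -> RR) :
  (forall x j t, 0 <= mm x j t) ->
  (forall x t, (t < T)%N -> \sum_j mm x j t <= 1) ->
  (forall x j, cross x j -> 1/20 <= \sum_(i < T) (mm x j i + mm (flip x j) j i)) ->
  (k.+1 <= 40 * T)%N.
Proof.
move=> H0 H1 Hc.
set G := fun x j => \sum_(i < T) mm x j i.
have G0 x j : 0 <= G x j by apply: sumr_ge0 => i _; exact: H0.
set B := \sum_x ((bnd x)%:R : RR).
have HB : 1 <= B.
  have [x0 Hx0] := exists_bnd.
  rewrite /B (bigD1 x0) //= Hx0 lerDl; apply: sumr_ge0 => x _; exact: ler0n.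
have L1 : (k.+1)%:R * B <= \sum_x \sum_j ((cross x j)%:R : RR).
  rewrite /B mulr_sumr; apply: ler_sum => x _.
  rewrite -natrM -natr_sum ler_nat; exact: count_cross.
have L2 : \sum_x \sum_j ((cross x j)%:R : RR) <=
          20 * \sum_x \sum_j (cross x j)%:R * (G x j + G (flip x j) j).
  rewrite mulr_sumr; apply: ler_sum => x _; rewrite mulr_sumr; apply: ler_sum => j _.
  case Hx: (cross x j); last by rewrite !mul0r mulr0.
  have := Hc x j Hx; rewrite mul1r /G -big_split /=; lra.
have E2 : \sum_x \sum_j ((cross x j)%:R : RR) * G (flip x j) j =
          \sum_x \sum_j (cross x j)%:R * G x j.
  rewrite exchange_big [RHS]exchange_big /=; apply: eq_bigr => j _.
  rewrite (reindex_inj (can_inj (flipK j))) /=.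
  by apply: eq_bigr => x _; rewrite cross_flip flipK.
have L3 : \sum_x \sum_j ((cross x j)%:R : RR) * G x j <= \sum_x (bnd x)%:R * T%:R.
  apply: ler_sum => x _.
  case Hb: (bnd x).
    rewrite mul1r.
    have h1 : \sum_j ((cross x j)%:R : RR) * G x j <= \sum_j G x j.
      apply: ler_sum => j _; case: (cross x j); rewrite ?mul1r ?mul0r //.
    apply: le_trans h1 _.
    rewrite /G exchange_big /=.
    have h2 : \sum_(i < T) \sum_j mm x j i <= \sum_(i < T) (1 : RR).
      by apply: ler_sum => i _; apply: H1 (ltn_ord i).
    apply: le_trans h2 _.
    by rewrite sumr_const card_ord.
  rewrite mul0r big1 // => j _.
  case Hc': (cross x j); last by rewrite mul0r.
  by move: (cross_bnd Hc'); rewrite Hb.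
have L4 : \sum_x \sum_j ((cross x j)%:R : RR) * (G x j + G (flip x j) j) =
   2 * \sum_x \sum_j ((cross x j)%:R : RR) * G x j.
  transitivity (\sum_x \sum_j ((cross x j)%:R : RR) * G x j +
                \sum_x \sum_j ((cross x j)%:R : RR) * G (flip x j) j).
    rewrite -big_split; apply: eq_bigr => x _; rewrite -big_split.
    by apply: eq_bigr => j _; rewrite mulrDr.
  by rewrite E2; ring.
have L5 : \sum_x (bnd x)%:R * T%:R = B * T%:R :> RR by rewrite /B mulr_suml.
have H : (k.+1)%:R * B <= 20 * (2 * (B * T%:R)) :> RR.
  apply: le_trans L1 _; apply: le_trans L2 _; rewrite L4 -L5.
  apply: ler_wpM2l => //; apply: ler_wpM2l => //.
have : (k.+1)%:R <= (40 * T)%:R :> RR.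
  rewrite natrM.
  have HB0 : 0 < B by apply: lt_le_trans HB; exact: ltr01.
  rewrite -(ler_pM2r HB0).
  move: H; set kk := (k.+1)%:R; set tt := T%:R.
  lra.
by rewrite ler_nat.
Qed.

End Cube.

Section Seqs.
Variable T : eqType.
Implicit Types u P Q : seq T.

Lemma prefix_split u P (c : T) Q :
  prefix u (P ++ c :: Q) -> c \notin u -> prefix u P.
Proof.
elim: P u => [|a P IH] [|x u] //=.
  by move=> /andP[/eqP -> _]; rewrite inE eqxx.
move=> /andP[/eqP -> H]; rewrite inE negb_or => /andP[_ Hc].
by rewrite eqxx /=; apply: IH.
Qed.

Lemma infix_split u P (c : T) Q :
  infix u (P ++ c :: Q) -> c \notin u -> infix u P || infix u Q.
Proof.
elim: P => [|a P IH]; rewrite ?cat_cons infix_consl.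
  move=> /orP[H|->] Hc; last by rewrite orbT.
  by move: (prefix_split (P := [::]) H Hc); rewrite prefixs0 => /eqP ->.
move=> /orP[H|H] Hc.
  by rewrite (prefixW (prefix_split (P := a :: P) H Hc)).
case/orP: (IH H Hc) => [H'|->]; last by rewrite orbT.
by rewrite infix_consl H' orbT.
Qed.

Lemma sorted_nth (e : rel T) x0 (s : seq T) :
  (forall i, i.+1 < size s -> e (nth x0 s i) (nth x0 s i.+1)) -> sorted e s.
Proof.
case: s => // y p H; apply/(pathP x0) => i Hi; exact: H.
Qed.

Lemma take_drop_head (u s : seq T) p x0 :
  take (size u) (drop p s) = u -> u != [::] ->
  p < size s /\ nth x0 s p = nth x0 u 0.
Proof.
move=> E Hu.
have Hp : p < size s.
  rewrite ltnNge; apply/negP => Hs.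
  by move: E Hu; rewrite drop_oversize // => <-.
split => //.
by rewrite -E nth_take ?lt0n ?size_eq0 // nth_drop addn0.
Qed.

End Seqs.

Lemma size_expand b (s : seq (run b)) : size (expand s) = sumn [seq r.2 | r <- s].
Proof.
rewrite /expand size_flatten /shape -map_comp; congr sumn.
by apply: eq_map => r /=; rewrite size_nseq.
Qed.

Lemma bits_neq_at b i j l (hl : l < b) :
  odd (i %/ 2 ^ l) != odd (j %/ 2 ^ l) -> bits_of b i != bits_of b j.
Proof.
move=> H; apply/eqP => /ffunP /(_ (Ordinal hl)); rewrite !ffunE /= => E.
by rewrite E eqxx in H.
Qed.

Section Strings.
Variables (b N' : nat).
Hypothesis Hb : 3 <= b.
Let N := N'.+1.
Let k := N'./2.
Let M := (2 * N + 2 * k + 1)%N.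
Hypothesis HM : M < 2 ^ b.

Lemma b0 : 0 < b. Proof. by apply: leq_trans Hb. Qed.
Lemma b1 : 1 < b. Proof. by apply: leq_trans Hb. Qed.
Lemma b2 : 2 < b. Proof. by []. Qed.

Definition wa := bits_of b 1.
Definition wb := bits_of b 2.
Definition wc := bits_of b 3.
Definition wd := bits_of b 4.
Definition we := bits_of b 5.

Lemma wab : wa != wb. Proof. exact: (@bits_neq_at _ _ _ 0 b0). Qed.
Lemma wac : wa != wc. Proof. exact: (@bits_neq_at _ _ _ 1 b1). Qed.
Lemma wad : wa != wd. Proof. exact: (@bits_neq_at _ _ _ 0 b0). Qed.
Lemma wae : wa != we. Proof. exact: (@bits_neq_at _ _ _ 2 Hb). Qed.
Lemma wbc : wb != wc. Proof. exact: (@bits_neq_at _ _ _ 0 b0). Qed.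
Lemma wbd : wb != wd. Proof. exact: (@bits_neq_at _ _ _ 1 b1). Qed.
Lemma wbe : wb != we. Proof. exact: (@bits_neq_at _ _ _ 0 b0). Qed.
Lemma wcd : wc != wd. Proof. exact: (@bits_neq_at _ _ _ 0 b0). Qed.
Lemma wce : wc != we. Proof. exact: (@bits_neq_at _ _ _ 1 b1). Qed.
Lemma wde : wd != we. Proof. exact: (@bits_neq_at _ _ _ 0 b0). Qed.


Definition chr (i : nat) := if odd i then wb else wa.
Definition Xr (x : {ffun 'I_N -> bool}) : seq (run b) :=
  mkseq (fun i => (chr i, (2 + 2 * x (inord i))%N)) N.
Definition Y (c : word b) x : seq (run b) := Xr x ++ [:: (c, 1%N); (wd, M)].
Definition Pe x := expand (Xr x).
Definition Dd := nseq M wd.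

Lemma expand_Y c x : expand (Y c x) = Pe x ++ c :: Dd.
Proof. by rewrite /expand /Y map_cat flatten_cat /= cats0. Qed.

Lemma size_Pe x : size (Pe x) = (2 * N + 2 * wt x)%N.
Proof.
rewrite /Pe size_expand /Xr /mkseq -map_comp sumnE big_map.
rewrite [iota 0 N](_ : _ = index_iota 0 N); last by rewrite /index_iota subn0.
rewrite big_mkord /=.
rewrite big_split /= sum_nat_const card_ord /wt -big_distrr /=.
congr (_ + _)%N; first by rewrite mulnC.
congr (2 * _)%N; apply: eq_bigr => i _; by rewrite inord_val.
Qed.

Lemma mem_Pe x z : z \in Pe x -> (z == wa) || (z == wb).
Proof.
move=> /flattenP [s /mapP [r /mapP [i _ ->] ->]]; rewrite mem_nseq => /andP[_ /eqP ->].
by rewrite /chr /=; case: (odd i); rewrite eqxx ?orbT.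
Qed.

Lemma wd_notin x : wd \notin Pe x.
Proof.
apply/negP => /mem_Pe /orP[] /eqP E.
  by move: wad; rewrite E eqxx.
by move: wbd; rewrite E eqxx.
Qed.

Lemma nthY c x d i : nth d (Y c x) i =
  if i < N then (chr i, (2 + 2 * x (inord i))%N)
  else if i == N then (c, 1%N) else if i == N.+1 then (wd, M) else d.
Proof.
rewrite /Y nth_cat /Xr size_mkseq.
case: ltnP => Hi; first by rewrite nth_mkseq.
have [m Hm] : exists m, i = N + m by exists (i - N); lia.
rewrite Hm addKn.
case: m Hm => [|[|m]] Hm.
- by rewrite addn0 eqxx.
- have -> : (N + 1 == N) = false by apply/negbTE; lia.
  by rewrite addn1 eqxx.
- rewrite /= nth_nil.
  have -> : (N + m.+2 == N) = false by apply/negbTE; lia.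
  have -> : (N + m.+2 == N.+1) = false by apply/negbTE; lia.
  by [].
Qed.

Lemma Y_valid c x : c != wa -> c != wb -> c != wd -> @valid_rle N.+2 b (Y c x).
Proof.
move=> ca cb cd; split.
- by rewrite /Y size_cat size_mkseq addn2.
- rewrite /Y all_cat; apply/andP; split.
    apply/allP => r /mapP [i _ ->] /=.
    have : 2 ^ 3 <= 2 ^ b by rewrite leq_exp2l.
    by case: (x (inord i)) => /=; lia.
  have : 2 ^ 1 <= 2 ^ b by rewrite leq_exp2l // (leq_trans _ Hb).
  by rewrite /= HM /= andbT; lia.
- apply: (sorted_nth (x0 := (wa, 0%N))) => i.
  have -> : size (Y c x) = N.+2 by rewrite /Y size_cat size_mkseq addn2.
  move=> Hi; rewrite !nthY /=.
  case: (ltnP i.+1 N) => H1.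
    rewrite (ltn_trans (ltnSn i) H1) /= /chr /=.
    by case: (odd i); rewrite /= ?wab // eq_sym wab.
  case: (ltnP i N) => H2.
    have -> : i.+1 = N by apply/eqP; rewrite eqn_leq H1 H2.
    rewrite eqxx /= /chr; case: (odd i); by rewrite eq_sym.
  have -> : i = N by lia.
  have -> : (N.+1 == N) = false by apply/negbTE; lia.
  by rewrite !eqxx /=.
Qed.

Lemma nthY_flip c x j d i : i != val j ->
  nth d (Y c (flip x j)) i = nth d (Y c x) i.
Proof.
move=> Hij; rewrite !nthY; case: ltnP => // Hi.
rewrite ffunE; case: eqP => // E.
by move: Hij; rewrite -E /= inordK // eqxx.
Qed.


Lemma wc_Dd : wc \notin Dd.
Proof. by rewrite /Dd mem_nseq negb_and wcd orbT. Qed.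

Lemma common_cases x u : infix u (expand (Y wc x)) -> infix u (expand (Y we x)) ->
  infix u (Pe x) || infix u Dd.
Proof.
rewrite !expand_Y => IA IB; apply: (infix_split IA).
have Hc : wc \notin Pe x ++ we :: Dd.
  rewrite mem_cat negb_or; apply/andP; split.
    apply/negP => /mem_Pe /orP[] /eqP E.
    - by move: wac; rewrite E eqxx.
    - by move: wbc; rewrite E eqxx.
  rewrite in_cons negb_or wce /=; exact: wc_Dd.
by apply/negP => /(mem_infix IB); apply/negP.
Qed.

Lemma Dd_infix c x : infix Dd (expand (Y c x)).
Proof. by apply/infixP; exists (rcons (Pe x) c), [::]; rewrite cats0 cat_rcons expand_Y. Qed.

Lemma Pe_infix c x : infix (Pe x) (expand (Y c x)).
Proof. by rewrite expand_Y prefix_infix. Qed.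

Lemma rs_cat (s1 s2 : seq (run b)) m :
  run_start (s1 ++ s2) (size s1 + m) = (sumn [seq r.2 | r <- s1] + run_start s2 m)%N.
Proof.
rewrite /run_start take_cat ltnNge leq_addr /= addKn.
by rewrite map_cat sumn_cat.
Qed.

Lemma rs_N1 c x : run_start (Y c x) N.+1 = (size (Pe x) + 1)%N.
Proof.
have -> : N.+1 = (size (Xr x) + 1)%N by rewrite size_mkseq addn1.
by rewrite /Y rs_cat /Pe size_expand.
Qed.

Lemma rs_mono (s : seq (run b)) i j : i <= j -> run_start s i <= run_start s j.
Proof.
move=> Hij; rewrite /run_start -[take j s](cat_take_drop i) take_takel //.
by rewrite map_cat sumn_cat leq_addr.
Qed.

Lemma rs_over (s : seq (run b)) i : size s <= i -> run_start s i = run_start s i.+1.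
Proof. by move=> H; rewrite /run_start !take_oversize // (leq_trans H). Qed.

Lemma sizeY c x : size (Y c x) = N.+2.
Proof. by rewrite /Y size_cat size_mkseq addn2. Qed.

Lemma lemA x o : (wt x <= k)%N -> valid_output (Y wc x) (Y we x) o -> o.1.1 = N.+1.
Proof.
move=> Hw [u [[IA IB Max] _ [p [Ep Hp1 Hp2]] _]].
have HM1 : M <= size u by have := Max Dd (Dd_infix _ _) (Dd_infix _ _); rewrite size_nseq.
have Hu : u != [::] by rewrite -size_eq0 -lt0n; apply: leq_trans HM1; rewrite /M addn1.
case/orP: (common_cases IA IB) => Hin.
  have := size_infix Hin; rewrite size_Pe => H; rewrite /M in HM1.
  exfalso.
  set su := size u in H HM1; lia.
have [Hp Hn] := take_drop_head wa Ep Hu.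
have h0 : 0 < size u by rewrite lt0n size_eq0.
have Hu0 : nth wa u 0 = wd.
  by have := mem_infix Hin (mem_nth wa h0); rewrite /Dd mem_nseq => /andP[_ /eqP].
rewrite Hu0 expand_Y nth_cat in Hn.
case: (ltngtP o.1.1 N.+1) => // Hi.
  have := rs_mono (Y wc x) Hi; rewrite rs_N1 => Hr.
  have Hps : p <= size (Pe x) by move: Hp2 Hr; set su := size (Pe x); lia.
  move: Hn; case: ltnP => Hps2.
    by move=> Hn; move: (wd_notin x); rewrite -Hn mem_nth.
  have -> : p - size (Pe x) = 0 by apply/eqP; rewrite subn_eq0.
  by move=> /= Hwc; move: wcd; rewrite Hwc eqxx.
have Hs : size (Y wc x) <= o.1.1 by rewrite sizeY.
by move: Hp1 Hp2; rewrite (rs_over Hs); lia.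
Qed.

Lemma lemB x o : (k < wt x)%N -> valid_output (Y wc x) (Y we x) o -> o.1.1 != N.+1.
Proof.
move=> Hw [u [[IA IB Max] _ [p [Ep Hp1 Hp2]] _]].
have HM1 : size (Pe x) <= size u by have := Max (Pe x) (Pe_infix _ _) (Pe_infix _ _).
rewrite size_Pe in HM1.
have Hu : u != [::] by rewrite -size_eq0 -lt0n; apply: leq_trans HM1; lia.
case/orP: (common_cases IA IB) => Hin; last first.
  have := size_infix Hin; rewrite size_nseq => H; rewrite /M in H.
  exfalso.
  set su := size u in H HM1; lia.
have [Hp Hn] := take_drop_head wa Ep Hu.
have h0 : 0 < size u by rewrite lt0n size_eq0.
have Hu0 : nth wa u 0 \in Pe x by apply: (mem_infix Hin); apply: mem_nth.
apply/eqP => Hi; rewrite Hi rs_N1 in Hp1.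
have HD : size (wc :: Dd) = M.+1 by rewrite /= /Dd size_nseq.
move: Hp; rewrite expand_Y size_cat HD => Hp.
rewrite expand_Y nth_cat in Hn.
move: Hn; case E: (p - size (Pe x)) => [|m]; first by move: Hp1 E; set su := size (Pe x); lia.
rewrite (_ : (p < size (Pe x)) = false); last by apply/negbTE; rewrite -leqNgt; move: Hp1; set su := size (Pe x); lia.
rewrite /= /Dd nth_nseq.
have -> : m < M by move: Hp E; set su := size (Pe x); lia.
by move=> Hn; move: (wd_notin x); rewrite Hn Hu0.
Qed.

End Strings.

Lemma om_invol n b m (A B : seq (run b)) : involutive (@oracle_map n b m A B).
Proof.
case=> [[[[s i] c] r] w] /=; congr (_, _, _, _); apply/ffunP => l; rewrite !ffunE;
by rewrite -addbA addbb addbF.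
Qed.

Definition qidx n b m (z : qspace n b m) : nat := val z.1.1.1.2.

Lemma om_idx n b m (A B : seq (run b)) z : qidx (@oracle_map n b m A B z) = qidx z.
Proof. by case: z => [[[[s i] c] r] w]. Qed.

Lemma om_agree n b m (A B A' B' : seq (run b)) j z :
  (forall d i, i != j -> nth d A i = nth d A' i) ->
  (forall d i, i != j -> nth d B i = nth d B' i) ->
  qidx z != j -> @oracle_map n b m A B z = oracle_map A' B' z.
Proof.
case: z => [[[[s i] c] r] w] HA HB Hi.
rewrite /qidx /= in Hi.
by rewrite /oracle_map; case: s; rewrite ?HA ?HB.
Qed.


Section Misc.
Local Open Scope ring_scope.
Notation RR := Rdefinitions.R.

Lemma sum_mj (X : finType) (idx : X -> nat) N (u : qstate X) :
  \sum_(j < N) mj idx j u <= nm u.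
Proof.
rewrite /mj /nm (exchange_big_dep xpredT) //=.
apply: ler_sum => z _.
case: (ltnP (idx z) N) => H.
  rewrite (big_pred1 (Ordinal H)) // => j /=.
rewrite big_pred0 ?sqr_ge0 // => j /=; apply/negbTE.
by rewrite neq_ltn (leq_trans (ltn_ord j) H) orbT.
Qed.

Lemma mass_conv (X : finType) (f : X -> Cx) (P : pred X) :
  (2%:R / 3%:R : Cx) <= \sum_(z | P z) `|f z| ^+ 2 ->
  2 / 3 <= \sum_(z | P z) nc (f z) ^+ 2 :> RR.
Proof.
have -> : \sum_(z | P z) `|f z| ^+ 2 = ((\sum_(z | P z) nc (f z) ^+ 2)%:C)%C.
  by rewrite rmorph_sum; apply: eq_bigr => z _; rewrite normE rmorphXn.
have -> : (2%:R / 3%:R : Cx) = ((2 / 3 : RR)%:C)%C.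
  by rewrite rmorphM fmorphV /= !rmorph_nat.
by rewrite lecR.
Qed.

End Misc.

Theorem corollary2 :
  exists c k K n0 : nat,
  forall (n b m T : nat)
         (U : nat -> op (qspace n b m)) (x0 : qspace n b m)
         (out : qspace n b m -> nat * nat * nat),
    (n0 <= n)%N ->
    (K * (trunc_log 2 n).+1 <= b)%N ->
    (forall t, (t <= T)%N -> unitary (U t)) ->
    (forall A B : seq (run b), @valid_rle n b A -> @valid_rle n b B ->
       @succeeds n b m T U x0 out A B) ->
    (n <= c * T * (trunc_log 2 n).+1 ^ k)%N.
Proof.
exists 82%N, 0%N, 3%N, 3%N => n b m T U x0 out Hn Hb HU Hsucc.
rewrite expn0 muln1.
have Hq := trunc_log_ltn n (isT : 1 < 2).
move: U x0 out HU Hsucc Hb Hq; case: n Hn => [|[|[|N']]] // _ U x0 out HU Hsucc Hb Hq.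
set k := N'./2.
have Hk : (2 * k <= N' /\ N' <= 2 * k + 1)%N.
  have := odd_double_half N'; rewrite -/k -mul2n; case: (odd N') => /=; lia.
have Hb3 : (2 < b)%N by move: Hb; set tl := trunc_log 2 _; lia.
have HM : (2 * N'.+1 + 2 * k + 1 < 2 ^ b)%N.
  move: Hq Hb; set tl := trunc_log 2 _ => Hq Hb.
  have H3 : (2 ^ tl.+1) ^ 3 <= 2 ^ b by rewrite -expnM mulnC leq_exp2l.
  move: H3 Hq; set q := 2 ^ tl.+1 => H3 Hq.
  have E3 : (q ^ 3 = q * q * q)%N by rewrite !expnS expn0 muln1 mulnA.
  rewrite E3 in H3.
  have Hq4 : (4 <= q)%N by lia.
  have : (16 * q <= q * q * q)%N by nia.
  lia.
pose pi := fun x : {ffun 'I_N'.+1 -> bool} =>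
  @oracle_map N'.+3 b m (Y (wc b) x) (Y (we b) x).
have Pinv x : involutive (pi x) by apply: om_invol.
have Pidx x z : qidx (pi x z) = qidx z by apply: om_idx.
have Hk1 : (2 * k + 1 <= N'.+1)%N by lia.
have VA (x : {ffun 'I_N'.+1 -> bool}) : @valid_rle N'.+3 b (Y (wc b) x).
  apply: Y_valid => //; rewrite ?(wcd Hb3) // eq_sym ?(wac Hb3) ?(wbc Hb3) //.
have VB (x : {ffun 'I_N'.+1 -> bool}) : @valid_rle N'.+3 b (Y (we b) x).
  apply: Y_valid => //; rewrite eq_sym ?(wae Hb3) ?(wbe Hb3) ?(wde Hb3) //.
have Hmain : (k < 40 * T)%N.
  apply: (@sum_arg N' k Hk1 T (fun x j t => mj (@qidx N'.+3 b m) (val j) (fs U x0 (pi x) t))).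
  - move=> x j t; apply: sumr_ge0 => z _; exact: sqr_ge0.
  - move=> x t Ht; apply: le_trans (sum_mj _ _ _) _.
    by rewrite (fs_norm x0 HU (Pinv x) (ltnW Ht)).
  move=> x j Hc.
  set y := flip x j.
  have Hag : forall z, qidx z != val j -> pi x z = pi y z.
    move=> z Hz; apply: om_agree Hz => d i Hi; by rewrite /y (nthY_flip Hb3 HM).
  have hp := fs_pair x0 HU (Pinv x) (Pinv y) (Pidx x) (Pidx y) Hag (leqnn T).
  have [P1 [HP1 HM1]] := Hsucc _ _ (VA x) (VB x).
  have [P2 [HP2 HM2]] := Hsucc _ _ (VA y) (VB y).
  have D : forall z, P1 z -> P2 z -> False.
    move=> z H1 H2; have V1 := HP1 z H1; have V2 := HP2 z H2.
    move: Hc; rewrite /cross -/y.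
    case Ex: (k < wt x)%N; case Ey: (k < wt y)%N => //= _.
      have := lemB Hb3 HM Ex V1.
      by rewrite (lemA Hb3 HM _ V2) ?eqxx // leqNgt Ey.
    have := lemB Hb3 HM Ey V2.
    by rewrite (lemA Hb3 HM _ V1) ?eqxx // leqNgt Ex.
  have F := @final_bound _ (fs U x0 (pi x) T) (fs U x0 (pi y) T) P1 P2
    (fs_norm x0 HU (Pinv x) (leqnn T)) (fs_norm x0 HU (Pinv y) (leqnn T)) D
    (mass_conv HM1) (mass_conv HM2).
  move: hp F => /=.
  lra.
lia.
Qed.
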